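(* Let $n_1,n_2\ge 1$ be integers, $n=n_1+n_2$, and consider a uniformly random arrangement of $n_1$ symbols $x$ and $n_2$ symbols $y$ (all $\binom{n}{n_1}$ arrangements equally likely). Let $R_1$ and $R_2$ be the numbers of runs of $x$'s and of $y$'s, respectively, and $R_M=\max(R_1,R_2)$. Then (i) $E(R_M\mid R_1>R_2)=2+\dfrac{(n_1-2)(n_2-1)}{n-2}$; (ii) $E(R_M\mid R_1<R_2)=2+\dfrac{(n_1-1)(n_2-2)}{n-2}$; (iii) $E(R_M\mid R_1=R_2)=1+\dfrac{(n_1-1)(n_2-1)}{n-2}$.
   Context: A run is a maximal block of consecutive identical symbols in the arrangement. Conditional expectations given an event are considered when that event has positive probability. *)

(* Defs.v *)
From mathcomp Require Import all_boot all_order all_algebra.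
Set Implicit Arguments. Unset Strict Implicit. Unset Printing Implicit Defensive.
Import Order.TTheory GRing.Theory Num.Theory.

(* An arrangement of n1 x's and n2 y's is a (n1+n2)-tuple of booleans,
   true = symbol x, false = symbol y, with exactly n1 entries equal to true. *)
Definition arrangements (n1 n2 : nat) : {set (n1 + n2).-tuple bool} :=
  [set s : (n1 + n2).-tuple bool | count id s == n1].

Definition runs (b : bool) (s : seq bool) : nat :=
  count (fun i => (nth false s i == b) && ((i == 0) || (nth false s i.-1 != b)))
        (iota 0 (size s)).

Definition R1 (s : seq bool) : nat := runs true s.
Definition R2 (s : seq bool) : nat := runs false s.
Definition RM (s : seq bool) : nat := maxn (R1 s) (R2 s).

Definition cond_exp (n1 n2 : nat) (X : seq bool -> nat) (E : pred (seq bool)) : rat :=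
  ((\sum_(s in arrangements n1 n2 | E (val s)) (X (val s))%:R) /
   (#|[set s in arrangements n1 n2 | E (val s)]|)%:R)%R.

Definition event_count (n1 n2 : nat) (E : pred (seq bool)) : nat :=
  #|[set s in arrangements n1 n2 | E (val s)]|.

(* Main.v *)
Require Import Defs.
From mathcomp Require Import all_boot all_order all_algebra.
From mathcomp Require Import zify ring lra.
Import Order.TTheory GRing.Theory Num.Theory.

Fixpoint rc (b p : bool) (s : seq bool) : nat :=
  if s is x :: t then ((x == b) && (p != b)) + rc b x t else 0.

Lemma cnt_gen b p s :
  count (fun i => (nth false s i == b) &&
     (if i is j.+1 then nth false s j != b else p != b)) (iota 0 (size s))
  = rc b p s.
Proof.
elim: s p => [|x t IH] p //=.
rewrite -(IH x) (iotaDl 1 0) count_map; congr (_ + _).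
by apply: eq_count => -[|i].
Qed.

Lemma runs_rc b s : runs b s = rc b (~~ b) s.
Proof.
rewrite /runs -cnt_gen; apply: eq_count => -[|i] //=.
by case: b.
Qed.

Lemma rc_rcons b p m x :
  rc b p (rcons m x) = rc b p m + ((x == b) && (last p m != b)).
Proof. by elim: m p => [|y m IH] p /=; rewrite ?addn0 // IH addnA. Qed.

Lemma rc_rel p s :
  rc true p s + (last p s == false) = rc false p s + (p == false).
Proof.
elim: s p => [|x t IH] p //=.
rewrite -addnA IH; case: x; case: p => /=; lia.
Qed.

Fixpoint arrn (n a : nat) : seq (seq bool) :=
  if n is n'.+1 then
    (if a is a'.+1 then map (cons true) (arrn n' a') else [::])
      ++ map (cons false) (arrn n' a)
  else (if a is 0 then [:: [::]] else [::]).

Lemma mem_map_cons (x y : bool) s L :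
  (y :: s \in map (cons x) L) = (y == x) && (s \in L).
Proof.
apply/mapP/andP => [[t tL [-> ->]]|[/eqP -> sL]]; first by rewrite eqxx.
by exists s.
Qed.

Lemma mem_map_nil (x : bool) L : ([::] \in map (cons x) L) = false.
Proof. by apply/mapP => -[]. Qed.

Lemma mem_map_rcons (x y : bool) s L :
  (rcons s y \in map (rcons^~ x) L) = (y == x) && (s \in L).
Proof.
apply/mapP/andP => [[t tL /rcons_inj [-> ->]]|[/eqP -> sL]]; first by rewrite eqxx.
by exists s.
Qed.

Lemma mem_map_rnil (x : bool) L : ([::] \in map (rcons^~ x) L) = false.
Proof. by apply/mapP => -[t _]; case: t. Qed.

Lemma mem_arrn n a s : (s \in arrn n a) = (size s == n) && (count id s == a).
Proof.
elim: n a s => [|n IH] a s /=.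
  by case: a => [|a]; case: s => [|x s].
rewrite mem_cat; case: s => [|y s].
  by case: a => [|a]; rewrite ?mem_map_nil.
case: a => [|a]; rewrite ?mem_map_cons ?IH; case: y => //=.
- by rewrite andbF.
- by rewrite orbF eqSS add1n eqSS.
Qed.

Lemma consI (x : bool) : injective (cons x).
Proof. by move=> s t []. Qed.

Lemma uniq_arrn n a : uniq (arrn n a).
Proof.
elim: n a => [|n IH] [|a] //=; rewrite ?cat_uniq ?map_inj_uniq ?IH //; try exact: consI.
rewrite andbT; apply/hasPn => s /mapP [t _ ->].
by rewrite mem_map_cons.
Qed.

Lemma size_arrn n a : size (arrn n a) = 'C(n, a).
Proof.
elim: n a => [|n IH] [|a] //=; rewrite ?size_cat !size_map !IH ?binS //.
  by rewrite !bin0.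
by rewrite addnC.
Qed.

Lemma arrn_rcons n a :
  perm_eq (arrn n.+1 a)
    ((if a is a'.+1 then map (rcons^~ true) (arrn n a') else [::])
       ++ map (rcons^~ false) (arrn n a)).
Proof.
apply: uniq_perm; first exact: uniq_arrn.
  case: a => [|a] /=; rewrite ?cat_uniq ?map_inj_uniq ?uniq_arrn ?andbT //;
    try exact: rcons_injl.
  apply/hasPn => s /mapP [t _ ->].
  by rewrite mem_map_rcons.
move=> s; rewrite mem_arrn mem_cat.
case/lastP: s => [|s y].
  by case: a => [|a]; rewrite ?mem_map_rnil.
rewrite size_rcons eqSS -cats1 count_cat cats1 /=.
case: a => [|a]; rewrite ?mem_map_rcons ?mem_arrn; case: y => /=;
  rewrite ?orbF ?andbF ?addn0 ?addn1 ?eqSS //.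
by rewrite andbF.
Qed.

Section Sums.
Variables (P : pred (seq bool)) (F : seq bool -> nat).

Lemma sum_arrnS n a :
  \sum_(s <- arrn n.+1 a | P s) F s =
  (if a is a'.+1 then \sum_(t <- arrn n a' | P (true :: t)) F (true :: t) else 0)
  + \sum_(t <- arrn n a | P (false :: t)) F (false :: t).
Proof. by case: a => [|a] /=; rewrite ?big_cat !big_map ?big_nil. Qed.

Lemma sum_arrn_rc n a :
  \sum_(s <- arrn n.+1 a | P s) F s =
  (if a is a'.+1 then \sum_(t <- arrn n a' | P (rcons t true)) F (rcons t true) else 0)
  + \sum_(t <- arrn n a | P (rcons t false)) F (rcons t false).
Proof.
rewrite (perm_big _ (arrn_rcons n a)).
by case: a => [|a] /=; rewrite ?big_cat !big_map ?big_nil.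
Qed.
End Sums.

Lemma sum4 (P : pred (seq bool)) (F : seq bool -> nat) k j :
  \sum_(s <- arrn k.+2 j.+1 | P s) F s =
  (if j is j'.+1 then \sum_(m <- arrn k j' | P (true :: rcons m true)) F (true :: rcons m true) else 0)
  + \sum_(m <- arrn k j | P (true :: rcons m false)) F (true :: rcons m false)
  + \sum_(m <- arrn k j | P (false :: rcons m true)) F (false :: rcons m true)
  + \sum_(m <- arrn k j.+1 | P (false :: rcons m false)) F (false :: rcons m false).
Proof.
rewrite sum_arrnS (sum_arrn_rc (fun t => P (true :: t)) (fun t => F (true :: t)))
  (sum_arrn_rc (fun t => P (false :: t)) (fun t => F (false :: t))).
by case: j => [|j] /=; rewrite !addnA.
Qed.

Lemma bridge n1 n2 (P : pred (seq bool)) (F : seq bool -> nat) :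
  \sum_(s in arrangements n1 n2 | P (val s)) F (val s)
  = \sum_(s <- arrn (n1 + n2) n1 | P s) F s.
Proof.
rewrite -big_enum_cond -(big_map val P F).
apply: perm_big; apply: uniq_perm.
- by rewrite map_inj_uniq ?enum_uniq //; exact: val_inj.
- exact: uniq_arrn.
move=> s; rewrite mem_arrn.
apply/mapP/andP => [[t]|[Hs Hc]].
  by rewrite mem_enum inE => /eqP Hc ->; rewrite size_tuple Hc eqxx.
exists (Tuple Hs) => //.
by rewrite mem_enum inE.
Qed.

Lemma count_eq n1 n2 (E : pred (seq bool)) :
  event_count n1 n2 E = \sum_(s <- arrn (n1 + n2) n1 | E s) 1.
Proof.
rewrite /event_count -sum1_card -(bridge n1 n2 E (fun _ => 1%N)).
by apply: eq_bigl => s; rewrite !inE.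
Qed.

Lemma cond_eq n1 n2 X (E : pred (seq bool)) :
  cond_exp n1 n2 X E =
  ((\sum_(s <- arrn (n1 + n2) n1 | E s) X s)%:R /
   (\sum_(s <- arrn (n1 + n2) n1 | E s) 1)%:R)%R.
Proof.
rewrite /cond_exp -count_eq /event_count -bridge.
by rewrite natr_sum.
Qed.

Arguments arrn : simpl never.

Lemma rc_true0 p s : count id s = 0 -> rc true p s = 0.
Proof. by elim: s p => [|x t IH] p //=; case: x => //= h; rewrite IH. Qed.

Lemma sumZ n p : \sum_(s <- arrn n 0) rc true p s = 0.
Proof.
rewrite big_seq big1 // => s; rewrite mem_arrn => /andP [_ /eqP]; exact: rc_true0.
Qed.

Lemma sum_addc (L : seq (seq bool)) c f :
  \sum_(t <- L) (c + f t) = (c * size L + \sum_(t <- L) f t)%N.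
Proof.
elim: L => [|x L IH]; first by rewrite !big_nil muln0.
rewrite !big_cons IH /=; lia.
Qed.

Lemma sum_rc_cons b p x n a :
  \sum_(t <- arrn n.+1 a) rc b p (x :: t) =
  (((x == b) && (p != b)) * 'C(n.+1, a) + \sum_(t <- arrn n.+1 a) rc b x t)%N.
Proof. by rewrite sum_addc size_arrn. Qed.

Lemma sum_arrnS' (F : seq bool -> nat) n a :
  \sum_(s <- arrn n.+1 a) F s =
  ((if a is a'.+1 then \sum_(t <- arrn n a') F (true :: t) else 0)
  + \sum_(t <- arrn n a) F (false :: t))%N.
Proof. exact: (sum_arrnS xpredT F n a). Qed.

Lemma L12 n a :
  \sum_(s <- arrn n.+1 a.+1) rc true false s = ('C(n, a) * (n - a).+1)%N /\
  \sum_(s <- arrn n.+1 a.+1) rc true true s = ('C(n, a) * (n - a))%N.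
Proof.
elim: n a => [|n IH] a.
  by case: a => [|a]; rewrite /= ?big_cons ?big_nil.
rewrite !(sum_arrnS' _ n.+1 a.+1) !sum_rc_cons /=.
case: a => [|a].
  rewrite !sumZ !(proj1 (IH 0)) !bin0 !subn0; lia.
rewrite !(proj1 (IH a.+1)) !(proj2 (IH a)) !binS !subSS.
have [h|h] := leqP a.+1 n; last by rewrite (bin_small h); nia.
have -> : (n - a = (n - a.+1).+1)%N by lia.
nia.
Qed.

Lemma L34 n a :
  \sum_(s <- arrn n.+1 a) rc false true s = ('C(n, a) * a.+1)%N /\
  \sum_(s <- arrn n.+1 a) rc false false s = ('C(n, a) * a)%N.
Proof.
elim: n a => [|n IH] a.
  by case: a => [|[|a]]; rewrite /arrn /= ?big_cons ?big_nil.
case: a => [|a].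
  rewrite !(sum_arrnS' _ n.+1 0) !sum_rc_cons /= !(proj2 (IH 0)) !bin0; lia.
rewrite !(sum_arrnS' _ n.+1 a.+1) !sum_rc_cons /= !(proj1 (IH a)) !(proj2 (IH a.+1)) !binS.
nia.
Qed.

Lemma R_hl h l m :
  (R1 (h :: rcons m l) + ~~ l = R2 (h :: rcons m l) + h)%N.
Proof.
rewrite /R1 /R2 !runs_rc /=.
have := rc_rel h (rcons m l); rewrite last_rcons.
by case: h; case: l => /=; lia.
Qed.

Lemma ev1 h l m : (R2 (h :: rcons m l) < R1 (h :: rcons m l))%N = h && l.
Proof. have := R_hl h l m; case: h; case: l => /= H; apply/idP/idP; lia. Qed.
Lemma ev2 h l m : (R1 (h :: rcons m l) < R2 (h :: rcons m l))%N = ~~ h && ~~ l.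
Proof. have := R_hl h l m; case: h; case: l => /= H; apply/idP/idP; lia. Qed.
Lemma ev3 h l m : (R1 (h :: rcons m l) == R2 (h :: rcons m l))%N = (h != l).
Proof. have := R_hl h l m; case: h; case: l => /= H; apply/idP/idP; lia. Qed.

Lemma sumE1 F k j :
  \sum_(s <- arrn k.+2 j.+1 | (R2 s < R1 s)%N) F s =
  if j is j'.+1 then \sum_(m <- arrn k j') F (true :: rcons m true) else 0%N.
Proof.
rewrite sum4; case: j => [|j];
rewrite ?(eq_bigl _ _ (ev1 true true)) (eq_bigl _ _ (ev1 true false))
  (eq_bigl _ _ (ev1 false true)) (eq_bigl _ _ (ev1 false false)) /=
  !big_pred0_eq; lia.
Qed.

Lemma sumE2 F k j :
  \sum_(s <- arrn k.+2 j.+1 | (R1 s < R2 s)%N) F s =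
  \sum_(m <- arrn k j.+1) F (false :: rcons m false).
Proof.
rewrite sum4; case: j => [|j];
rewrite ?(eq_bigl _ _ (ev2 true true)) (eq_bigl _ _ (ev2 true false))
  (eq_bigl _ _ (ev2 false true)) (eq_bigl _ _ (ev2 false false)) /=
  !big_pred0_eq; lia.
Qed.

Lemma sumE3 F k j :
  \sum_(s <- arrn k.+2 j.+1 | (R1 s == R2 s)%N) F s =
  (\sum_(m <- arrn k j) F (true :: rcons m false) +
   \sum_(m <- arrn k j) F (false :: rcons m true))%N.
Proof.
rewrite sum4; case: j => [|j];
rewrite ?(eq_bigl _ _ (ev3 true true)) (eq_bigl _ _ (ev3 true false))
  (eq_bigl _ _ (ev3 false true)) (eq_bigl _ _ (ev3 false false)) /=
  !big_pred0_eq; lia.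
Qed.

Lemma RM_TT m : RM (true :: rcons m true) = (rc false true m).+1.
Proof.
have H := R_hl true true m.
have E : R2 (true :: rcons m true) = rc false true m.
  by rewrite /R2 runs_rc /= rc_rcons /= addn0.
rewrite /RM; simpl in H; lia.
Qed.

Lemma RM_FF m : RM (false :: rcons m false) = (rc true false m).+1.
Proof.
have H := R_hl false false m.
have E : R1 (false :: rcons m false) = rc true false m.
  by rewrite /R1 runs_rc /= rc_rcons /= addn0.
rewrite /RM; simpl in H; lia.
Qed.

Lemma RM_TF m : RM (true :: rcons m false) = (rc true true m).+1.
Proof.
have H := R_hl true false m.
have E : R1 (true :: rcons m false) = (rc true true m).+1.
  by rewrite /R1 runs_rc /= rc_rcons /= addn0.
rewrite /RM; simpl in H; lia.
Qed.

Lemma RM_FT m : RM (false :: rcons m true) = (rc false false m).+1.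
Proof.
have H := R_hl false true m.
have E : R2 (false :: rcons m true) = (rc false false m).+1.
  by rewrite /R2 runs_rc /= rc_rcons /= addn0.
rewrite /RM; simpl in H; lia.
Qed.

Local Open Scope ring_scope.

Theorem lemma2 (n1 n2 : nat) (h1 : (1 <= n1)%N) (h2 : (1 <= n2)%N) :
  ((0 < event_count n1 n2 (fun s => (R1 s > R2 s)%N))%N ->
     cond_exp n1 n2 RM (fun s => (R1 s > R2 s)%N)
     = 2 + ((n1%:R - 2) * (n2%:R - 1)) / ((n1 + n2)%:R - 2) :> rat)
  /\
  ((0 < event_count n1 n2 (fun s => (R1 s < R2 s)%N))%N ->
     cond_exp n1 n2 RM (fun s => (R1 s < R2 s)%N)
     = 2 + ((n1%:R - 1) * (n2%:R - 2)) / ((n1 + n2)%:R - 2) :> rat)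
  /\
  ((0 < event_count n1 n2 (fun s => (R1 s == R2 s)%N))%N ->
     cond_exp n1 n2 RM (fun s => (R1 s == R2 s)%N)
     = 1 + ((n1%:R - 1) * (n2%:R - 1)) / ((n1 + n2)%:R - 2) :> rat).
Proof.
case: n1 h1 => // j _; case: n2 h2 => // b _.
rewrite !count_eq !cond_eq addSn addnS.
split; [|split].
- rewrite !sumE1; case: j => [|j] //= _.
  rewrite (eq_bigr (fun m => 1 + rc false true m)%N); last by move=> m _; rewrite RM_TT add1n.
  rewrite sum_addc sum1_size size_arrn addSn (proj1 (L34 (j + b) j)).
  have Hn := mul_bin_down (j + b).+1 j.
  have Hc : (0 < 'C((j + b).+1, j))%N by rewrite bin_gt0; lia.
  rewrite (_ : ((j + b).+1 - j = b.+1)%N) /= in Hn; last by lia.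
  move: Hn Hc; set c := 'C((j + b).+1, j); set d := 'C(j + b, j) => Hn Hc; clearbody c d.
  have hd : d%:R = b.+1%:R * c%:R / (j + b).+1%:R :> rat.
    apply: (mulfI (x := (j + b).+1%:R)); first by rewrite pnatr_eq0.
    by rewrite [RHS]mulrC divfK ?pnatr_eq0 // -!natrM Hn.
  rewrite natrD !natrM hd.
  have Hc' : c%:R != 0 :> rat by rewrite pnatr_eq0 -lt0n.
  rewrite -!natr1 !natrD.
  field; rewrite Hc' andbT; apply: lt0r_neq0.
  have := ler0n rat j; have := ler0n rat b; lra.
- rewrite !sumE2 => Hpos.
  rewrite (eq_bigr (fun m => 1 + rc true false m)%N); last by move=> m _; rewrite RM_FF add1n.
  rewrite sum_addc sum1_size size_arrn.
  case: b Hpos => [|b]; first by rewrite sum1_size size_arrn addn0 bin_small.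
  move=> _; rewrite addnS (proj1 (L12 (j + b) j)).
  have Hn := mul_bin_diag (j + b).+1 j.
  have Hc : (0 < 'C((j + b).+1, j.+1))%N by rewrite bin_gt0; lia.
  have -> : (j + b - j = b)%N by lia.
  rewrite /= in Hn.
  move: Hn Hc; set c := 'C((j + b).+1, j.+1); set d := 'C(j + b, j) => Hn Hc; clearbody c d.
  have hd : d%:R = j.+1%:R * c%:R / (j + b).+1%:R :> rat.
    apply: (mulfI (x := (j + b).+1%:R)); first by rewrite pnatr_eq0.
    by rewrite [RHS]mulrC divfK ?pnatr_eq0 // -!natrM Hn.
  rewrite natrD !natrM hd.
  have Hc' : c%:R != 0 :> rat by rewrite pnatr_eq0 -lt0n.
  rewrite -!natr1 !natrD.
  field; rewrite Hc' andbT; apply: lt0r_neq0.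
  have := ler0n rat j; have := ler0n rat b; lra.
- rewrite !sumE3 => _.
  have -> : \sum_(m <- arrn (j + b) j) RM (true :: rcons m false) =
    \sum_(m <- arrn (j + b) j) (1 + rc true true m)%N.
    by apply: eq_bigr => m _; rewrite RM_TF add1n.
  have -> : \sum_(m <- arrn (j + b) j) RM (false :: rcons m true) =
    \sum_(m <- arrn (j + b) j) (1 + rc false false m)%N.
    by apply: eq_bigr => m _; rewrite RM_FT add1n.
  rewrite !sum_addc !sum1_size !size_arrn.
  case: j => [|j].
    rewrite sumZ add0n; case: b => [|b].
      rewrite /arrn /= big_cons big_nil /= !addn0 bin0 !mul1n.
      by rewrite divff // subrr !mul0r addr0.
    rewrite (proj2 (L34 b 0)) bin0 !muln0 !addn0 !mul1n.
    by rewrite divff // subrr !mul0r addr0.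
  rewrite addSn (proj2 (L12 (j + b) j)) (proj2 (L34 (j + b) j.+1)).
  have Hn1 := mul_bin_diag (j + b).+1 j.
  have Hn2 := mul_bin_down (j + b).+1 j.+1.
  have Hc : (0 < 'C((j + b).+1, j.+1))%N by rewrite bin_gt0; lia.
  have -> : (j + b - j = b)%N by lia.
  rewrite (_ : ((j + b).+1 - j.+1 = b)%N) /= in Hn2; last by lia.
  rewrite /= in Hn1.
  move: Hn1 Hn2 Hc; set c := 'C((j + b).+1, j.+1); set d1 := 'C(j + b, j);
    set d2 := 'C(j + b, j.+1) => Hn1 Hn2 Hc; clearbody c d1 d2.
  have hd1 : d1%:R = j.+1%:R * c%:R / (j + b).+1%:R :> rat.
    apply: (mulfI (x := (j + b).+1%:R)); first by rewrite pnatr_eq0.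
    by rewrite [RHS]mulrC divfK ?pnatr_eq0 // -!natrM Hn1.
  have hd2 : d2%:R = b%:R * c%:R / (j + b).+1%:R :> rat.
    apply: (mulfI (x := (j + b).+1%:R)); first by rewrite pnatr_eq0.
    by rewrite [RHS]mulrC divfK ?pnatr_eq0 // -!natrM Hn2.
  rewrite !natrD !natrM hd1 hd2.
  have Hc' : c%:R != 0 :> rat by rewrite pnatr_eq0 -lt0n.
  rewrite -!natr1 !natrD.
  field; rewrite ?Hc' ?andbT; try apply: lt0r_neq0;
  have := ler0n rat j; have := ler0n rat b; lra.
Qed.
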